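(* Let $A,B,C$ be real random variables on a common probability space with finite second moments, $\mathrm{Var}(B)>0$, $\mathbb{E}[A]\neq0$, $\mathbb{E}[C]\neq 0$, and set $R=\mathbb{E}[A]/\mathbb{E}[C]$. Let $n\ge1$ and let $(A_i,B_i,C_i)_{i=1,\dots,n}$ be i.i.d. copies of $(A,B,C)$. For $\alpha\in\mathbb{R}$ put $N_\alpha=\overline{A_n}+\alpha(\mathbb{E}[B]-\overline{B_n})$, and let $\alpha_o'=\frac{\mathrm{Cov}(A,B)-R\,\mathrm{Cov}(B,C)}{\mathrm{Var}(B)}$. Then $$\Phi(N_{\alpha_o'},\overline{C_n})-\Phi(\overline{A_n},\overline{C_n})=-\frac{1}{n\,\mathbb{E}[C]^2}\,\frac{\big(\mathrm{Cov}(A,B)-R\,\mathrm{Cov}(B,C)\big)^2}{\mathrm{Var}(B)}\le 0 .$$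
   Context: For a random variable $X$, $\overline{X_n}=\frac1n\sum_{i=1}^n X_i$ denotes the sample mean of the i.i.d. copies $X_1,\dots,X_n$. For real random variables $X,Z$ with finite second moments and $\mathbb{E}[Z]\neq0$, define the first-order (delta-method) approximation of the variance of the ratio $X/Z$: $$\Phi(X,Z)=\frac{\mathrm{Var}(X)}{\mathbb{E}[Z]^2}+\frac{\mathbb{E}[X]^2}{\mathbb{E}[Z]^4}\mathrm{Var}(Z)-2\frac{\mathbb{E}[X]}{\mathbb{E}[Z]^3}\mathrm{Cov}(X,Z).$$ $\Phi(N_\alpha,\overline{C_n})$ is the paper's variance of the CV/MC estimator $N_\alpha/\overline{C_n}$ of $R$, and $\Phi(\overline{A_n},\overline{C_n})$ that of the Monte Carlo ratio estimator $\overline{A_n}/\overline{C_n}$; $\mathbb{E}[B]$ is a known constant. *)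

(* Defs.v *)
From HB Require Import structures.
From mathcomp Require Import all_boot all_order all_algebra.
From mathcomp Require Import all_classical all_reals all_analysis.
Set Implicit Arguments. Unset Strict Implicit. Unset Printing Implicit Defensive.
Import Order.TTheory GRing.Theory Num.Theory.
Local Open Scope classical_set_scope.
Local Open Scope ring_scope.

Definition Ex {d} {T : measurableType d} {R : realType} (P : probability T R)
  (X : T -> R) : R := fine 'E_P[X].
Definition Var {d} {T : measurableType d} {R : realType} (P : probability T R)
  (X : T -> R) : R := fine (variance P X).
Definition Cov {d} {T : measurableType d} {R : realType} (P : probability T R)
  (X Y : T -> R) : R := fine (covariance P X Y).

(* First-order (delta-method) variance approximation of the ratio X/Z. *)
Definition Phi {d} {T : measurableType d} {R : realType} (P : probability T R)
  (X Z : T -> R) : R :=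
  Var P X / Ex P Z ^+ 2 + Ex P X ^+ 2 / Ex P Z ^+ 4 * Var P Z
  - 2 * (Ex P X / Ex P Z ^+ 3) * Cov P X Z.

Definition sample_mean {T} {R : realType} (n : nat) (X : 'I_n -> T -> R) : T -> R :=
  fun w => n%:R^-1 * \sum_(i < n) X i w.

Definition triple {T} {R : realType} (X Y Z : T -> R) : T -> (R * R * R)%type :=
  fun w => (X w, Y w, Z w).

Definition iid_copies {d} {T : measurableType d} {R : realType}
  (P : probability T R) (n : nat) (A B C : T -> R)
  (Ai Bi Ci : 'I_n -> T -> R) : Prop :=
  [/\ (forall i, measurable_fun setT (Ai i) /\ measurable_fun setT (Bi i)
                 /\ measurable_fun setT (Ci i)),
      (forall S : 'I_n -> set (R * R * R)%type, (forall i, measurable (S i)) ->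
         P (\bigcap_i (triple (Ai i) (Bi i) (Ci i) @^-1` S i)) =
         (\prod_(i < n) P (triple (Ai i) (Bi i) (Ci i) @^-1` S i))%E) &
      (forall (i : 'I_n) (S : set (R * R * R)%type), measurable S ->
         P (triple (Ai i) (Bi i) (Ci i) @^-1` S) = P (triple A B C @^-1` S))].

(* Main.v *)
Require Import Defs.
From HB Require Import structures.
From mathcomp Require Import all_boot all_order all_algebra.
From mathcomp Require Import all_classical all_reals all_analysis.
From mathcomp Require Import measurable_realfun.
Import Order.TTheory GRing.Theory Num.Theory.
Local Open Scope classical_set_scope.
Local Open Scope ring_scope.
From mathcomp Require Import ring lra.
Section law.
Context d (T : measurableType d) (R : realType) (P : probability T R).
Context d' (U : measurableType d').
Local Open Scope ereal_scope.

Lemma law_ge0 (W1 W2 : T -> U) :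
  measurable_fun setT W1 -> measurable_fun setT W2 ->
  (forall S, measurable S -> P (W1 @^-1` S) = P (W2 @^-1` S)) ->
  forall g : U -> \bar R, measurable_fun setT g -> (forall t, 0 <= g t) ->
  \int[P]_x g (W1 x) = \int[P]_x g (W2 x).
Proof.
move=> m1 m2 hl g mg g0.
have := ge0_integral_pushforward m1 P measurableT mg (fun y _ => g0 y).
rewrite preimage_setT => <-.
have := ge0_integral_pushforward m2 P measurableT mg (fun y _ => g0 y).
rewrite preimage_setT => <-.
by apply: eq_measure_integral => A mA _; exact: hl.
Qed.

Lemma law_int (W1 W2 : T -> U) :
  measurable_fun setT W1 -> measurable_fun setT W2 ->
  (forall S, measurable S -> P (W1 @^-1` S) = P (W2 @^-1` S)) ->
  forall g : U -> \bar R, measurable_fun setT g ->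
  P.-integrable setT (g \o W2) ->
  P.-integrable setT (g \o W1) /\ \int[P]_x g (W1 x) = \int[P]_x g (W2 x).
Proof.
move=> m1 m2 hl g mg ig.
have i1 : P.-integrable setT (g \o W1).
  apply/integrableP; split; first exact: measurableT_comp.
  move/integrableP: ig => [_]; rewrite (@law_ge0 W1 W2 m1 m2 hl (abse \o g))//.
  exact: measurableT_comp.
  by move=> t; exact: abse_ge0.
split => //.
have := integral_pushforward m1 mg _ measurableT.
rewrite preimage_setT => <- //.
have := integral_pushforward m2 mg _ measurableT.
rewrite preimage_setT => <- //.
by apply: eq_measure_integral => A mA _; exact: hl.
Qed.
End law.
Section indep.
Context d (T : measurableType d) (R : realType) (P : probability T R).
Local Open Scope ereal_scope.

Lemma Lfun_meas {p : \bar R} {U : T -> R} : U \in Lfun P p -> measurable_fun setT U.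
Proof. by rewrite inE => /andP[/[!inE]/= mU _]. Qed.

Lemma indep_mul (U V : T -> R) : U \in Lfun P 2%:E -> V \in Lfun P 2%:E ->
 (forall S1 S2 : set R, measurable S1 -> measurable S2 ->
    P (U @^-1` S1 `&` V @^-1` S2) = P (U @^-1` S1) * P (V @^-1` S2)) ->
 'E_P[(U \* V)%R] = 'E_P[U] * 'E_P[V].
Proof.
move=> hU hV hind.
have mU := Lfun_meas hU; have mV := Lfun_meas hV.
have mW : measurable_fun setT (fun x => (U x, V x)) := measurable_fun_pair mU mV.
pose U' : {mfun T >-> R} := HB.pack U (isMeasurableFun.Build _ _ _ _ _ mU).
pose V' : {mfun T >-> R} := HB.pack V (isMeasurableFun.Build _ _ _ _ _ mV).
pose W' : {mfun T >-> (R * R)%type} :=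
  HB.pack (fun x => (U x, V x)) (isMeasurableFun.Build _ _ _ _ _ mW).
pose lU := distribution P U'.
pose lV := distribution P V'.
pose pi := distribution P W'.
have piE : forall X, measurable X -> (lU \x lV) X = pi X.
  apply: product_measure_unique => A B mA mB.
  rewrite /pi /lU /lV /distribution /pushforward /=.
  exact: (hind _ _ mA mB).
pose f : (R * R)%type -> \bar R := fun z => (z.1 * z.2)%:E.
have mf : measurable_fun setT f.
  by apply/measurable_EFinP; apply: measurable_funM; [exact: measurable_fst|exact: measurable_snd].
have hUV1 : (U \* V)%R \in Lfun P 1 := Lfun2_mul_Lfun1 hU hV.
have iUV : P.-integrable setT (f \o W') by exact/Lfun1_integrable.
have ipi : pi.-integrable setT f.
  exact: (integrable_pushforward mW mf iUV measurableT).
have iprod : (lU \x lV).-integrable setT f.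
  apply/integrableP; split => //.
  rewrite (eq_measure_integral pi); first by case/integrableP: ipi.
  by move=> A mA _; exact: piE.
have mid : measurable_fun setT (@EFin R) by exact/measurable_EFinP.
have hU1 : U \in Lfun P 1 := Lfun_subset12 (fin_num_measure P _ measurableT) hU.
have hV1 : V \in Lfun P 1 := Lfun_subset12 (fin_num_measure P _ measurableT) hV.
have iU : P.-integrable setT (EFin \o U') by exact/Lfun1_integrable.
have iV : P.-integrable setT (EFin \o V') by exact/Lfun1_integrable.
have ilV : lV.-integrable setT EFin := integrable_pushforward mV mid iV measurableT.
have ilU : lU.-integrable setT EFin := integrable_pushforward mU mid iU measurableT.
have EU : \int[lU]_x x%:E = 'E_P[U].
  rewrite (integral_pushforward mU mid iU measurableT) preimage_setT.
  by rewrite unlock.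
have EV : \int[lV]_x x%:E = 'E_P[V].
  rewrite (integral_pushforward mV mid iV measurableT) preimage_setT.
  by rewrite unlock.
transitivity (\int[pi]_z f z).
  rewrite (integral_pushforward mW mf iUV measurableT) preimage_setT.
  by rewrite unlock.
rewrite (eq_measure_integral (lU \x lV)); last first.
  by move=> A mA _; exact/esym/piE.
rewrite -(integral12_prod_meas1 iprod).
transitivity (\int[lU]_x (x%:E * 'E_P[V])).
  apply: eq_integral => x _; rewrite /fubini_F.
  under eq_integral do rewrite /f /= EFinM.
  by rewrite integralZl // EV.
rewrite -[in LHS](fineK (expectation_fin_num hV1)).
by rewrite integralZr // EU fineK // expectation_fin_num.
Qed.
End indep.
Section bilin.
Context d (T : measurableType d) (R : realType) (P : probability T R).
Implicit Types X Y Z : T -> R.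
Local Notation L2 := (Lfun P 2%:E).

Let Pfin : P setT \is a fin_num := fin_num_measure P _ measurableT.
Lemma L21 X : X \in L2 -> X \in Lfun P 1.
Proof. exact: Lfun_subset12. Qed.

Lemma cfin X Y : X \in L2 -> Y \in L2 -> covariance P X Y \is a fin_num.
Proof. by move=> hX hY; apply: covariance_fin_num; [exact: L21|exact: L21|exact: Lfun2_mul_Lfun1]. Qed.

Lemma efin X : X \in L2 -> ('E_P[X])%E \is a fin_num.
Proof. by move=> hX; apply: expectation_fin_num; exact: L21. Qed.

Lemma CovDl X Y Z : X \in L2 -> Y \in L2 -> Z \in L2 ->
  Cov P (X \+ Y)%R Z = Cov P X Z + Cov P Y Z.
Proof. by move=> hX hY hZ; rewrite /Cov covarianceDl // fineD // cfin. Qed.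

Lemma CovZl a X Y : X \in L2 -> Y \in L2 ->
  Cov P (a \o* X)%R Y = a * Cov P X Y.
Proof.
move=> hX hY; rewrite /Cov covarianceZl //; last exact: Lfun2_mul_Lfun1.
  by rewrite fineM // cfin.
exact: L21. exact: L21.
Qed.

Lemma CovC X Y : Cov P X Y = Cov P Y X.
Proof. by rewrite /Cov covarianceC. Qed.

Lemma Cov_cstl c X : Cov P (cst c) X = 0.
Proof. by rewrite /Cov covariance_cst_l. Qed.

Lemma ExD X Y : X \in L2 -> Y \in L2 -> Ex P (X \+ Y)%R = Ex P X + Ex P Y.
Proof. by move=> hX hY; rewrite /Ex expectationD ?L21 // fineD // efin. Qed.

Lemma ExZ a X : X \in L2 -> Ex P (a \o* X)%R = a * Ex P X.
Proof. by move=> hX; rewrite /Ex expectationZl ?L21 // fineM // efin. Qed.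

Lemma Ex_cst c : Ex P (cst c) = c.
Proof. by rewrite /Ex expectation_cst. Qed.

Lemma L2D X Y : X \in L2 -> Y \in L2 -> (X \+ Y)%R \in L2.
Proof.
move=> hX hY.
have p1 : (1 <= 2%:E :> \bar R)%E by rewrite lee_fin ler1n.
exact: ((Lfun_addr_closed P p1).2 X Y hX hY).
Qed.

Lemma L2Z a X : X \in L2 -> (a \o* X)%R \in L2.
Proof. by move=> hX; apply: Lfun_scale => //; rewrite ler1n. Qed.

Lemma L2cst c : (cst c : T -> R) \in L2.
Proof. exact: Lfun_cst. Qed.

Section sums.
Context (I : Type) (F : I -> T -> R) (hF : forall i, F i \in L2).

Lemma L2sum (r : seq I) : (fun w => \sum_(i <- r) F i w) \in L2.
Proof.
elim: r => [|a r IH].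
  by rewrite (_ : (fun _ => _) = cst 0); [exact: L2cst|apply/funext => w; rewrite big_nil].
rewrite (_ : (fun _ => _) = (F a \+ (fun w => \sum_(i <- r) F i w))%R); first exact: L2D.
by apply/funext => w; rewrite big_cons.
Qed.

Lemma Covsum (r : seq I) Y : Y \in L2 ->
  Cov P (fun w => \sum_(i <- r) F i w) Y = \sum_(i <- r) Cov P (F i) Y.
Proof.
move=> hY; elim: r => [|a r IH].
  rewrite (_ : (fun _ => _) = cst 0); first by rewrite Cov_cstl big_nil.
  by apply/funext => w; rewrite big_nil.
rewrite (_ : (fun _ => _) = (F a \+ (fun w => \sum_(i <- r) F i w))%R).
  by rewrite CovDl // ?L2sum // IH big_cons.
by apply/funext => w; rewrite big_cons.
Qed.

Lemma Exsum (r : seq I) :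
  Ex P (fun w => \sum_(i <- r) F i w) = \sum_(i <- r) Ex P (F i).
Proof.
elim: r => [|a r IH].
  rewrite (_ : (fun _ => _) = cst 0); first by rewrite Ex_cst big_nil.
  by apply/funext => w; rewrite big_nil.
rewrite (_ : (fun _ => _) = (F a \+ (fun w => \sum_(i <- r) F i w))%R).
  by rewrite ExD // ?L2sum // IH big_cons.
by apply/funext => w; rewrite big_cons.
Qed.
End sums.
End bilin.
Arguments L21 {d T R P X}.
Arguments efin {d T R P X}.
Arguments cfin {d T R P X Y}.
Section iid.
Context d (T : measurableType d) (R : realType) (P : probability T R).
Variables (A B C : T -> R) (n : nat) (Ai Bi Ci : 'I_n -> T -> R).
Local Notation L2 := (Lfun P 2%:E).
Hypotheses (hA : A \in L2) (hB : B \in L2) (hC : C \in L2)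
  (hiid : iid_copies P A B C Ai Bi Ci).

Definition tr i := triple (Ai i) (Bi i) (Ci i).
Definition tr0 := triple A B C.

Lemma mtr i : measurable_fun setT (tr i).
Proof.
case: hiid => hm _ _; have [m1 [m2 m3]] := hm i.
by apply: measurable_fun_pair => //; exact: measurable_fun_pair.
Qed.

Lemma mtr0 : measurable_fun setT tr0.
Proof.
apply: measurable_fun_pair; last exact: Lfun_meas hC.
by apply: measurable_fun_pair; [exact: Lfun_meas hA|exact: Lfun_meas hB].
Qed.

Lemma hlaw i S : measurable S -> P (tr i @^-1` S) = P (tr0 @^-1` S).
Proof. by case: hiid => _ _ h; exact: h. Qed.

Definition sel (s : (R * R * R)%type -> R) i := fun x => s (tr i x).
Definition sel0 (s : (R * R * R)%type -> R) := fun x => s (tr0 x).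

Section sel1.
Variables (s : (R * R * R)%type -> R).
Hypotheses (ms : measurable_fun setT s).
Hypotheses (h0 : sel0 s \in L2).

Lemma sel_L2 i : sel s i \in L2.
Proof.
rewrite inE; apply/andP; split.
  by rewrite inE /=; exact: measurableT_comp ms (mtr i).
move: h0; rewrite inE => /andP[_]; rewrite !inE /= /finite_norm unlock /=.
suff -> : (\int[P]_x `|(EFin \o sel s i) x| `^ 2 = \int[P]_x `|(EFin \o sel0 s) x| `^ 2)%E by [].
apply: (@law_ge0 _ _ _ P _ _ _ _ (mtr i) mtr0 (hlaw i) (fun t => `|(s t)%:E| `^ 2)%E).
  apply: (measurableT_comp (measurable_poweR (R:=R) 2)).
  apply: measurableT_comp => //; exact/measurable_EFinP.
by move=> t; exact: poweR_ge0.
Qed.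

Lemma sel_E i : ('E_P[sel s i] = 'E_P[sel0 s])%E.
Proof.
have mg : measurable_fun setT (EFin \o s) by exact/measurable_EFinP.
have ig : P.-integrable setT ((EFin \o s) \o tr0).
  by apply/Lfun1_integrable; exact: L21.
have [_ h] := @law_int _ _ _ P _ _ _ _ (mtr i) mtr0 (hlaw i) _ mg ig.
by rewrite unlock; exact: h.
Qed.

End sel1.
Section sel.
Variables (s s' : (R * R * R)%type -> R).
Hypotheses (ms : measurable_fun setT s) (ms' : measurable_fun setT s').
Hypotheses (h0 : sel0 s \in L2) (h0' : sel0 s' \in L2).

Lemma sel_EM i : ('E_P[(sel s i \* sel s' i)%R] = 'E_P[(sel0 s \* sel0 s')%R])%E.
Proof.
have mg : measurable_fun setT (fun t => (s t * s' t)%:E).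
  by apply/measurable_EFinP; exact: measurable_funM.
have ig : P.-integrable setT ((fun t => (s t * s' t)%:E) \o tr0).
  by apply/Lfun1_integrable; exact: Lfun2_mul_Lfun1.
have [_ h] := @law_int _ _ _ P _ _ _ _ (mtr i) mtr0 (hlaw i) _ mg ig.
by rewrite unlock; exact: h.
Qed.

Lemma sel_indep i j : i != j -> forall S1 S2 : set R, measurable S1 -> measurable S2 ->
  P (sel s i @^-1` S1 `&` sel s' j @^-1` S2) =
  (P (sel s i @^-1` S1) * P (sel s' j @^-1` S2))%E.
Proof.
move=> ij S1 S2 mS1 mS2.
pose Sf k := if k == i then s @^-1` S1 else if k == j then s' @^-1` S2 else setT.
have mSf k : measurable (Sf k).
  rewrite /Sf; case: eqP => _; first by rewrite -[X in measurable X]setTI; exact: ms.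
  by case: eqP => _ //; rewrite -[X in measurable X]setTI; exact: ms'.
case: hiid => _ hind _.
have := hind Sf mSf.
have -> : \bigcap_k (triple (Ai k) (Bi k) (Ci k) @^-1` Sf k) =
    sel s i @^-1` S1 `&` sel s' j @^-1` S2.
  apply/seteqP; split => x /=.
    move=> h; split.
      by have := h i I; rewrite /Sf eqxx.
    by have := h j I; rewrite /Sf eq_sym (negbTE ij) eqxx.
  move=> [h1 h2] k _; rewrite /Sf; case: eqP => [->//|_].
  by case: eqP => [->//|_].
move=> ->.
rewrite (bigD1 i) //= (bigD1 j) /=; last by rewrite eq_sym.
rewrite big1 ?mule1.
  by rewrite /Sf eqxx eq_sym (negbTE ij) eqxx.
move=> k /andP[ki kj]; rewrite /Sf (negbTE ki) (negbTE kj) preimage_setT.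
exact: probability_setT.
Qed.

Lemma sel_cov i j : Cov P (sel s i) (sel s' j) =
  if i == j then Cov P (sel0 s) (sel0 s') else 0.
Proof.
have h01 := L21 h0; have h01' := L21 h0'; have h00 := Lfun2_mul_Lfun1 h0 h0'.
have hi := sel_L2 s ms h0 i; have hj := sel_L2 s' ms' h0' j.
have hi1 := L21 hi; have hj1 := L21 hj; have hij := Lfun2_mul_Lfun1 hi hj.
case: eqP => [ji|/eqP ij].
  subst j.
  by rewrite /Cov !covarianceE // sel_EM // !sel_E.
rewrite /Cov covarianceE //.
rewrite indep_mul // ?subee //; last exact: sel_indep.
by rewrite fin_numM // efin.
Qed.
End sel.

Hypothesis hn : (0 < n)%N.

Lemma sm_eq s : sample_mean (fun i => sel s i) =
  (n%:R^-1 \o* (fun w => \sum_(i < n) sel s i w))%R.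
Proof. by apply/funext => w; rewrite /sample_mean /= mulrC. Qed.

Lemma smean_L2 s : measurable_fun setT s -> sel0 s \in L2 ->
  sample_mean (fun i => sel s i) \in L2.
Proof.
move=> ms h0; rewrite sm_eq; apply: L2Z; apply: L2sum => i.
exact: sel_L2.
Qed.

Lemma smean_E s : measurable_fun setT s -> sel0 s \in L2 ->
  Ex P (sample_mean (fun i => sel s i)) = Ex P (sel0 s).
Proof.
move=> ms h0; rewrite sm_eq ExZ; last by apply: L2sum => i; exact: sel_L2.
rewrite Exsum; last by move=> i; exact: sel_L2.
under eq_bigr do rewrite /Ex (sel_E s ms h0).
rewrite sumr_const card_ord; set e := fine _; rewrite -(mulr_natl e n) mulrA mulVf ?mul1r //.
by rewrite pnatr_eq0 -lt0n hn.
Qed.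

Lemma smean_cov s s' : measurable_fun setT s -> measurable_fun setT s' ->
  sel0 s \in L2 -> sel0 s' \in L2 ->
  Cov P (sample_mean (fun i => sel s i)) (sample_mean (fun i => sel s' i)) =
  n%:R^-1 * Cov P (sel0 s) (sel0 s').
Proof.
move=> ms ms' h0 h0'.
have hS := @L2sum _ _ _ P _ _ (fun i => sel_L2 s ms h0 i) (index_enum 'I_n).
have hS' := @L2sum _ _ _ P _ _ (fun i => sel_L2 s' ms' h0' i) (index_enum 'I_n).
have H : Cov P (fun w => \sum_(i < n) sel s i w) (fun w => \sum_(j < n) sel s' j w)
    = n%:R * Cov P (sel0 s) (sel0 s').
  rewrite Covsum //; last by move=> i; exact: sel_L2.
  transitivity (\sum_(i < n) Cov P (sel0 s) (sel0 s')); last first.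
    by rewrite sumr_const card_ord mulr_natl.
  apply: eq_bigr => i _; have hi := sel_L2 s ms h0 i; rewrite CovC Covsum //; last by move=> j; exact: sel_L2.
  rewrite (bigD1 i) //= CovC sel_cov // eqxx big1 ?addr0 // => j /negbTE ji.
  by rewrite CovC sel_cov // eq_sym ji.
rewrite !sm_eq CovZl //; last exact: L2Z.
rewrite CovC CovZl // CovC H.
have n0 : (n%:R : R) != 0 by rewrite pnatr_eq0 -lt0n hn.
by rewrite mulKf.
Qed.
End iid.
Theorem mainTheorem4 (d : measure_display) (T : measurableType d) (R : realType)
  (P : probability T R) (A B C : T -> R) (n : nat)
  (Ai Bi Ci : 'I_n -> T -> R) :
  A \in Lfun P 2%:E -> B \in Lfun P 2%:E -> C \in Lfun P 2%:E ->
  0 < Var P B -> Ex P A != 0 -> Ex P C != 0 ->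
  (1 <= n)%N ->
  iid_copies P A B C Ai Bi Ci ->
  let Rr := Ex P A / Ex P C in
  let Abar := sample_mean Ai in
  let Bbar := sample_mean Bi in
  let Cbar := sample_mean Ci in
  let N := fun alpha : R => (fun w => Abar w + alpha * (Ex P B - Bbar w)) in
  let alpha_o := (Cov P A B - Rr * Cov P B C) / Var P B in
  Phi P (N alpha_o) Cbar - Phi P Abar Cbar =
    - ((n%:R * Ex P C ^+ 2)^-1 * ((Cov P A B - Rr * Cov P B C) ^+ 2 / Var P B))
  /\ Phi P (N alpha_o) Cbar - Phi P Abar Cbar <= 0.
Proof.
move=> hA hB hC hVB hEA hEC hn hiid Rr Abar Bbar Cbar N alpha_o.
pose sA := fun t : (R * R * R)%type => t.1.1.
pose sB := fun t : (R * R * R)%type => t.1.2.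
pose sC := fun t : (R * R * R)%type => t.2.
have msA : measurable_fun setT sA.
  by apply: measurableT_comp; exact: measurable_fst.
have msB : measurable_fun setT sB.
  by apply: measurableT_comp; [exact: measurable_snd|exact: measurable_fst].
have msC : measurable_fun setT sC by exact: measurable_snd.
have hAb : Abar \in Lfun P 2%:E := @smean_L2 _ _ _ P _ _ _ _ _ _ _ hA hB hC hiid _ msA hA.
have hBb : Bbar \in Lfun P 2%:E := @smean_L2 _ _ _ P _ _ _ _ _ _ _ hA hB hC hiid _ msB hB.
have hCb : Cbar \in Lfun P 2%:E := @smean_L2 _ _ _ P _ _ _ _ _ _ _ hA hB hC hiid _ msC hC.
have EAb : Ex P Abar = Ex P A := @smean_E _ _ _ P _ _ _ _ _ _ _ hA hB hC hiid hn _ msA hA.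
have EBb : Ex P Bbar = Ex P B := @smean_E _ _ _ P _ _ _ _ _ _ _ hA hB hC hiid hn _ msB hB.
have ECb : Ex P Cbar = Ex P C := @smean_E _ _ _ P _ _ _ _ _ _ _ hA hB hC hiid hn _ msC hC.
have cBB : Cov P Bbar Bbar = n%:R^-1 * Var P B :=
  @smean_cov _ _ _ P _ _ _ _ _ _ _ hA hB hC hiid hn _ _ msB msB hB hB.
have cAB : Cov P Abar Bbar = n%:R^-1 * Cov P A B :=
  @smean_cov _ _ _ P _ _ _ _ _ _ _ hA hB hC hiid hn _ _ msA msB hA hB.
have cBC : Cov P Bbar Cbar = n%:R^-1 * Cov P B C :=
  @smean_cov _ _ _ P _ _ _ _ _ _ _ hA hB hC hiid hn _ _ msB msC hB hC.
set a := Ex P A; set b := Ex P B; set c := Ex P C.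
set al := alpha_o.
have hN : N al = ((Abar \+ cst (al * b)) \+ (- al) \o* Bbar)%R.
  by apply/funext => w; rewrite /N /b /=; ring.
have hNL : N al \in Lfun P 2%:E by rewrite hN; apply: L2D; [apply: L2D => //; exact: L2cst|exact: L2Z].
have CovN W : W \in Lfun P 2%:E -> Cov P (N al) W = Cov P Abar W + (- al) * Cov P Bbar W.
  move=> hW; rewrite hN CovDl //; [|apply: L2D => //; exact: L2cst|exact: L2Z].
  by rewrite CovDl //; [rewrite Cov_cstl addr0 CovZl|exact: L2cst].
have ExN : Ex P (N al) = a.
  rewrite hN ExD //; [|apply: L2D => //; exact: L2cst|exact: L2Z].
  by rewrite ExD //; [rewrite Ex_cst ExZ // EAb EBb -/a -/b; ring|exact: L2cst].
have VarN : Var P (N al) = Var P Abar + al ^+ 2 * Cov P Bbar Bbar - 2 * al * Cov P Abar Bbar.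
  rewrite (_ : Var P (N al) = Cov P (N al) (N al)) // CovN //.
  rewrite CovC CovN // [Cov P Bbar (N al)]CovC CovN // [Cov P Bbar Abar]CovC.
  rewrite (_ : Var P Abar = Cov P Abar Abar) //; ring.
have CNC := CovN _ hCb.
have c0 : c != 0 := hEC.
have n0 : (n%:R : R) != 0 by rewrite pnatr_eq0 -lt0n hn.
have v0 : Var P B != 0 by rewrite gt_eqF.
have key : Phi P (N al) Cbar - Phi P Abar Cbar =
    - ((n%:R * c ^+ 2)^-1 * ((Cov P A B - Rr * Cov P B C) ^+ 2 / Var P B)).
  rewrite /Phi ExN EAb ECb VarN CNC cBB cAB cBC /al /alpha_o /Rr.
  rewrite -/a -/c; field; rewrite n0 c0 v0 //.
split => //; rewrite key oppr_le0.
apply: mulr_ge0; first by rewrite invr_ge0 mulr_ge0 // ?sqr_ge0.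
by apply: divr_ge0; [exact: sqr_ge0|exact: ltW].
Qed.
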